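(* Let $G$ be a finite, simple, connected graph which is not a tree. Then $G$ contains a cycle which is $W(G)/3$-supported.
   Context: For a vertex $r$ of $G$ (the root) and $x\in V(G)$, let $\ell_r(x)=d_G(r,x)$ (the level of $x$). For an integer $n\ge 0$, let $R_r(n)$ be the set of edges $xy\in E(G)$ with $\max\{\ell_r(x),\ell_r(y)\}>n$, and write $x\simeq_n y$ if $x$ and $y$ lie in the same connected component of the graph $(V(G),R_r(n))$ (in particular $x\simeq_n x$). Define $W(r)=\max_{n\ge 0}\max\{d_G(x,y): \ell_r(x)=\ell_r(y)=n,\ x\simeq_n y\}$ and the cycle width $W(G)=\max_{r\in V(G)}W(r)$. A cycle $C$ in $G$ is called $k$-supported (for a real number $k$) if $C$ can be partitioned into three edge-disjoint paths $I_1,I_2,I_3$, with $I_1\cap I_2$, $I_2\cap I_3$ and $I_3\cap I_1$ each consisting of exactly one vertex, such that for every triple of vertices $(u_1,u_2,u_3)$ with $u_i\in V(I_i)$ we have $\max_{i,j\in\{1,2,3\}} d_G(u_i,u_j)\ge k$. *)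

(* Defs.v *)
From mathcomp Require Import all_boot all_order all_algebra.
Set Implicit Arguments. Unset Strict Implicit. Unset Printing Implicit Defensive.
Import Order.TTheory GRing.Theory Num.Theory.

Section Graph.
Variables (T : finType) (e : rel T).

Definition simple_graph := symmetric e /\ irreflexive e.
Definition connected_graph := forall x y : T, connect e x y.

Definition walk_len (x y : T) (k : nat) : bool :=
  [exists p : k.-tuple T, path e x p && (last x p == y)].

(* Graph distance d_G(x,y): the least k with a walk of length k from x to y
   (a shortest walk has length < #|T|; correct for connected graphs). *)
Definition dist (x y : T) : nat := find (walk_len x y) (iota 0 #|T|).

Definition is_gpath (p : seq T) : bool :=
  uniq p && (if p is x :: q then path e x q else false).

Definition is_gcycle (c : seq T) : bool :=
  [&& uniq c, 3 <= size c & cycle e c].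

(* Undirected edge set (both orientations) traversed by a vertex sequence. *)
Definition pedges (p : seq T) : {set T * T} :=
  [set u | (u \in zip p (behead p)) || ((u.2, u.1) \in zip p (behead p))].

(* Edge set of a cycle c (closing edge included). *)
Definition cedges (c : seq T) : {set T * T} := pedges (c ++ take 1 c).

Definition acyclic_graph := forall c : seq T, ~~ is_gcycle c.
Definition is_tree := connected_graph /\ acyclic_graph.

Definition level (r x : T) : nat := dist r x.

Definition sim_n (r : T) (n : nat) : rel T :=
  connect (fun a b => e a b && (n < maxn (level r a) (level r b))).

(* W(r) = max over n of max{ d(x,y) : l(x)=l(y)=n, x ~_n y };
   the index n is determined as n = l(x). *)
Definition Wr (r : T) : nat :=
  \max_(x : T) \max_(y : T | (level r y == level r x) && sim_n r (level r x) x y)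
     dist x y.

Definition cycle_width : nat := \max_(r : T) Wr r.

Definition k_supported (k : rat) (c : seq T) : Prop :=
  exists I1 I2 I3 : seq T,
    [/\ is_gpath I1, is_gpath I2 & is_gpath I3] /\
    pedges I1 :|: pedges I2 :|: pedges I3 = cedges c /\
    [/\ pedges I1 :&: pedges I2 = set0, pedges I2 :&: pedges I3 = set0
      & pedges I3 :&: pedges I1 = set0] /\
    [/\ #|[set v | (v \in I1) && (v \in I2)]| = 1,
        #|[set v | (v \in I2) && (v \in I3)]| = 1
      & #|[set v | (v \in I3) && (v \in I1)]| = 1] /\
    (forall u1 u2 u3 : T, u1 \in I1 -> u2 \in I2 -> u3 \in I3 ->
       (k <= (maxn (dist u1 u2) (maxn (dist u2 u3) (dist u3 u1)))%:R)%R).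

End Graph.

(* Main.v *)
Require Import Defs.
From mathcomp Require Import all_boot all_order all_algebra.
From mathcomp Require Import zify.
From Stdlib Require Import Classical.
Import Order.TTheory GRing.Theory Num.Theory.
Set Implicit Arguments. Unset Strict Implicit.


Section Dist.
Variables (T : finType) (e : rel T).
Variable (esym : symmetric e) (eirr : irreflexive e) (econ : connected_graph e).

Lemma walk_lenP x y k :
  reflect (exists p, [/\ size p = k, path e x p & last x p = y]) (walk_len e x y k).
Proof.
apply: (iffP existsP) => [[p /andP[Hp /eqP Hl]]|[p [Hs Hp Hl]]].
  by exists (val p); rewrite size_tuple.
have Hs' : size p == k by apply/eqP.
by exists (Tuple Hs'); rewrite /= Hp Hl eqxx.
Qed.

Lemma dist_le x y k : walk_len e x y k -> dist e x y <= k.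
Proof.
move=> Hw; rewrite /dist; case: (ltnP k #|T|) => Hk.
  rewrite leqNgt; apply/negP => Hf.
  have := before_find 0 Hf; rewrite nth_iota // add0n Hw //.
by apply: leq_trans (find_size _ _) _; rewrite size_iota.
Qed.

Lemma dist_walk x y : walk_len e x y (dist e x y).
Proof.
have [p Hp ->] := connectP (econ x y).
case: (shortenP Hp) => p' Hp' Hu _.
have Hs : size p' < #|T|.
  by move/card_uniqP: Hu => /= <-; apply: max_card.
have Hh : has (walk_len e x (last x p')) (iota 0 #|T|).
  apply/hasP; exists (size p'); first by rewrite mem_iota.
  by apply/walk_lenP; exists p'.
have := nth_find 0 Hh; rewrite nth_iota; first by rewrite add0n.
by move: Hh; rewrite has_find size_iota.
Qed.

Lemma walk_cat x y z a b : walk_len e x y a -> walk_len e y z b -> walk_len e x z (a + b).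
Proof.
move=> /walk_lenP [p [<- Hp Hl]] /walk_lenP [q [<- Hq Hl']].
apply/walk_lenP; exists (p ++ q); rewrite size_cat cat_path last_cat Hl Hp Hq.
by [].
Qed.

Lemma walk_rev x y k : walk_len e x y k -> walk_len e y x k.
Proof.
move=> /walk_lenP [p [<- Hp <-]]; apply/walk_lenP.
exists (rev (belast x p)); split.
- by rewrite size_rev size_belast.
- rewrite rev_path; apply: sub_path Hp => u v; by rewrite esym.
- case: p {Hp} => //= z p; by rewrite rev_cons last_rcons.
Qed.

Lemma dist_sym x y : dist e x y = dist e y x.
Proof.
by apply/eqP; rewrite eqn_leq !dist_le // walk_rev // dist_walk.
Qed.

Lemma dist_tri x y z : dist e x z <= dist e x y + dist e y z.
Proof. by apply: dist_le; apply: walk_cat; apply: dist_walk. Qed.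

Lemma dist_xx x : dist e x x = 0.
Proof. by apply/eqP; rewrite -leqn0; apply: dist_le; apply/walk_lenP; exists [::]; split. Qed.

Lemma dist0 x y : dist e x y = 0 -> x = y.
Proof. move=> H; have := dist_walk x y; rewrite H => /walk_lenP [p [Hs _ Hl]]; by case: p Hs Hl. Qed.

Lemma dist_edge x y : e x y -> dist e x y <= 1.
Proof. by move=> H; apply: dist_le; apply/walk_lenP; exists [:: y]; rewrite /= H; split. Qed.

Variable r : T.
Local Notation lv := (level e r).

Lemma lv_lip x y : lv y <= lv x + dist e x y.
Proof. exact: dist_tri. Qed.

Lemma lv_edge x y : e x y -> lv y <= (lv x).+1.
Proof. by move=> H; rewrite -addn1; apply: leq_trans (lv_lip x y) _; rewrite leq_add2l dist_edge. Qed.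

Lemma lv0 x : lv x = 0 -> x = r.
Proof. by move/dist0. Qed.

Lemma pred_lv x m : lv x = m.+1 -> exists2 x', e x' x & lv x' = m.
Proof.
move=> Hx; have := dist_walk r x; rewrite -/(lv x) Hx => /walk_lenP [p [Hs Hp Hl]].
case/lastP: p Hs Hp Hl => [//|p z]; rewrite size_rcons rcons_path last_rcons => [[Hs]] /andP[Hp Hz] Hl.
subst z; exists (last r p) => //.
apply/eqP; rewrite eqn_leq; apply/andP; split.
  by rewrite /level -Hs; apply: dist_le; apply/walk_lenP; exists p.
by rewrite -ltnS -Hx lv_edge // esym.
Qed.


Definition geo a s x := [/\ path e a s, last a s = x, lv x = lv a + size s,
   map lv s = iota (lv a).+1 (size s)
 & forall u, u \in a :: s -> dist e u x + lv u <= lv x].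

Lemma geo_lt a s x v : geo a s x -> v \in s -> lv a < lv v <= lv x.
Proof.
case=> _ _ Hx Hm _ Hv.
have : lv v \in map lv s by apply: map_f.
by rewrite Hm mem_iota Hx addSn ltnS.
Qed.

Lemma twogeo n : forall x y, lv x = n -> lv y = n -> x != y ->
  exists a s1 s2, [/\ geo a s1 x, geo a s2 y & forall v, v \in s1 -> v \in s2 -> False].
Proof.
elim: n => [|m IH] x y Hx Hy Hxy.
  by move: Hxy; rewrite (lv0 Hx) (lv0 Hy) eqxx.
have [x' Ex Hx'] := pred_lv Hx; have [y' Ey Hy'] := pred_lv Hy.
have Dx : dist e x' x <= 1 by apply: dist_edge.
have Dy : dist e y' y <= 1 by apply: dist_edge.
case: (eqVneq x' y') => [Exy|Nxy].
  subst y'; exists x', [:: x], [:: y]; split.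
  - split => //=; first by rewrite Ex.
    + by rewrite Hx Hx' addn1.
    + by rewrite Hx Hx'.
    move=> u; rewrite !inE => /orP[] /eqP ->; last by rewrite dist_xx.
    by rewrite Hx Hx'; lia.
  - split => //=; first by rewrite Ey.
    + by rewrite Hy Hx' addn1.
    + by rewrite Hy Hx'.
    move=> u; rewrite !inE => /orP[] /eqP ->; last by rewrite dist_xx.
    by rewrite Hy Hx'; lia.
  by move=> v; rewrite !inE => /eqP -> /eqP Hv; rewrite Hv eqxx in Hxy.
have [a [s1 [s2 [G1 G2 Hd]]]] := IH _ _ Hx' Hy' Nxy.
have ext : forall s z z', geo a s z' -> e z' z -> lv z = (lv z').+1 ->
    geo a (rcons s z) z.
  move=> s z z' [Gp Gl Gx Gm Gd] Ez Hz; split.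
  - by rewrite rcons_path Gp Gl Ez.
  - by rewrite last_rcons.
  - by rewrite size_rcons Hz Gx addnS.
  - by rewrite map_rcons size_rcons -(addn1 (size s)) iotaD Gm -cats1 Hz Gx addSn.
  move=> u; rewrite -rcons_cons mem_rcons inE => /orP[/eqP ->|Hu].
    by rewrite dist_xx.
  have := Gd u Hu; have := dist_tri u z' z; have := dist_edge Ez; lia.
exists a, (rcons s1 x), (rcons s2 y); split.
- by apply: ext G1 Ex _; rewrite Hx Hx'.
- by apply: ext G2 Ey _; rewrite Hy Hy'.
move=> v; rewrite !mem_rcons !inE => /orP[/eqP ->|H1] /orP[/eqP H2|H2].
- by rewrite H2 eqxx in Hxy.
- by have := geo_lt G2 H2; rewrite Hx Hy' ltnn andbF.
- by have := geo_lt G1 H1; rewrite H2 Hx' Hy ltnn andbF.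
- exact: Hd H1 H2.
Qed.
End Dist.


Section Supp.
Variables (T : finType) (e : rel T).
Variable (esym : symmetric e) (eirr : irreflexive e).

Lemma pedges1 (x : T) : pedges [:: x] = set0.
Proof. by apply/setP => u; rewrite !inE. Qed.

Lemma pedges2 (x y : T) s : pedges [:: x, y & s] = [set (x, y); (y, x)] :|: pedges (y :: s).
Proof.
apply/setP => [[u1 u2]]; rewrite !inE /= !xpair_eqE.
by case: (u1 == x); case: (u2 == y); case: (u1 == y); case: (u2 == x);
   case: ((u1, u2) \in _); case: ((u2, u1) \in _).
Qed.

Lemma pedges_cat (x : T) p q : pedges (x :: p ++ q) = pedges (x :: p) :|: pedges (last x p :: q).
Proof.
elim: p x => [|y p IH] x /=; first by rewrite pedges1 set0U.
by rewrite pedges2 IH pedges2 setUA.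
Qed.

Lemma pedges_mem x s u : path e x s -> u \in pedges (x :: s) ->
  [/\ u.1 \in x :: s, u.2 \in x :: s & u.1 != u.2].
Proof.
elim: s x => [|y s IH] x; first by move=> _; rewrite pedges1 in_set0.
rewrite /= => /andP[Hxy Hp]; rewrite pedges2 in_setU in_set2 => /orP[/orP[]|].
- move=> /eqP -> /=; rewrite !inE !eqxx orbT; split => //.
  by apply/eqP => Exy; rewrite Exy eirr in Hxy.
- move=> /eqP -> /=; rewrite !inE !eqxx orbT; split => //.
  by apply/eqP => Exy; rewrite Exy eirr in Hxy.
move=> /(IH _ Hp) [H1 H2 H3]; split => //; rewrite inE ?H1 ?H2 orbT //.
Qed.

Lemma last_in (x : T) s : s != [::] -> last x s \in s.
Proof. by case: s => //= y s _; apply: mem_last. Qed.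

Lemma disj_edges x s y t z : path e x s -> path e y t ->
  [set v | (v \in x :: s) && (v \in y :: t)] = [set z] ->
  pedges (x :: s) :&: pedges (y :: t) = set0.
Proof.
move=> Px Py E; apply/setP => u; rewrite in_setI in_set0; apply/negP.
move=> /andP[/(pedges_mem Px) [A1 A2 A3] /(pedges_mem Py) [B1 B2 B3]].
have : u.1 \in [set z] by rewrite -E inE A1 B1.
have : u.2 \in [set z] by rewrite -E inE A2 B2.
by rewrite !inE => /eqP E2 /eqP E1; rewrite E1 E2 eqxx in A3.
Qed.

Lemma supp (a : T) s1 s2 t3 (k : rat) :
  s1 != [::] -> s2 != [::] -> uniq (a :: s1 ++ s2 ++ t3) ->
  path e a s1 -> path e (last a s1) s2 -> path e (last (last a s1) s2) (rcons t3 a) ->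
  (forall u1 u2 u3, u1 \in a :: s1 -> u2 \in last a s1 :: s2 ->
     u3 \in last (last a s1) s2 :: rcons t3 a ->
     (k <= (maxn (dist e u1 u2) (maxn (dist e u2 u3) (dist e u3 u1)))%:R)%R) ->
  is_gcycle e (a :: s1 ++ s2 ++ t3) /\ k_supported e k (a :: s1 ++ s2 ++ t3).
Proof.
move=> N1 N2 U P1 P2 P3 Hd.
set b := last a s1 in P2 P3 Hd *; set c := last b s2 in P3 Hd *.
have Hb : b \in s1 by apply: last_in.
have Hc : c \in s2 by apply: last_in.
have U' := U; move: U'; rewrite -cat_cons cat_uniq => /and3P[U1 Hn].
rewrite cat_uniq => /and3P[U2 Hn23 U3].
have D1 v : v \in a :: s1 -> v \in s2 -> False.
  by move=> H1 H2; move/hasPn: Hn => /(_ v); rewrite mem_cat H2 H1 => /(_ isT).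
have D2 v : v \in a :: s1 -> v \in t3 -> False.
  by move=> H1 H2; move/hasPn: Hn => /(_ v); rewrite mem_cat H2 orbT H1 => /(_ isT).
have D3 v : v \in s2 -> v \in t3 -> False.
  by move=> H1 H2; move/hasPn: Hn23 => /(_ v); rewrite H2 H1 => /(_ isT).
have Ha1 : a \notin s1 by move: U1; rewrite cons_uniq => /andP[].
have Hb' : b \in a :: s1 by rewrite inE Hb orbT.
have Ha' : a \in a :: s1 by rewrite inE eqxx.
have S12 : [set v | (v \in a :: s1) && (v \in b :: s2)] = [set b].
  apply/setP => v; rewrite !inE; apply/idP/idP => [/andP[H1 /orP[//|H2]]|/eqP ->].
    by case: (D1 _ H1 H2).
  by rewrite Hb orbT eqxx.
have S23 : [set v | (v \in b :: s2) && (v \in c :: rcons t3 a)] = [set c].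
  apply/setP => v; rewrite !inE mem_rcons inE; apply/idP/idP; last first.
    by move=> /eqP ->; rewrite Hc orbT eqxx.
  case/andP => /orP[/eqP ->|H1] /or3P[/eqP H|/eqP H|H].
  - by case: (D1 b Hb'); rewrite H.
  - by move/negP: Ha1; rewrite -H.
  - by case: (D2 _ Hb' H).
  - by rewrite H eqxx.
  - by case: (D1 a Ha'); rewrite -H.
  - by case: (D3 _ H1 H).
have S31 : [set v | (v \in c :: rcons t3 a) && (v \in a :: s1)] = [set a].
  apply/setP => v; rewrite !inE mem_rcons inE; apply/idP/idP; last first.
    by move=> /eqP ->; rewrite eqxx !orbT.
  case/andP => /or3P[/eqP H|/eqP H|H] H1; have H1' : v \in a :: s1 by rewrite inE.
  - by case: (D1 _ H1'); rewrite H.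
  - by rewrite H eqxx.
  - by case: (D2 _ H1' H).
split.
  rewrite /is_gcycle U /= !size_cat; apply/andP; split.
    have : 0 < size s1 by rewrite lt0n size_eq0.
    have : 0 < size s2 by rewrite lt0n size_eq0.
    move=> h2 h1; rewrite ltnS addnA; apply: leq_trans (leq_addr _ _); exact: (leq_add h1 h2).
  by rewrite !rcons_cat !cat_path P1 P2 P3.
exists (a :: s1), (b :: s2), (c :: rcons t3 a); split; last split; last split; last split.
- rewrite /is_gpath; split.
  + by rewrite U1 P1.
  + by rewrite P2 andbT /= U2 andbT; apply/negP => /(D1 _ Hb').
  rewrite P3 andbT cons_uniq rcons_uniq U3 andbT mem_rcons inE !negb_or; apply/andP; split; [apply/andP; split|].
  + by apply/negP => /eqP E; case: (D1 a Ha'); rewrite -E.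
  + by apply/negP => /(D3 _ Hc).
  + by apply/negP => /(D2 _ Ha').
- rewrite /cedges (_ : ((a :: s1) ++ s2 ++ t3) ++ take 1 ((a :: s1) ++ s2 ++ t3) = a :: s1 ++ s2 ++ rcons t3 a); last first.
    by rewrite /= take0 cats1 !rcons_cat.
  by rewrite pedges_cat pedges_cat setUA.
- split; [exact: disj_edges P1 P2 S12 | exact: disj_edges P2 P3 S23 | exact: disj_edges P3 P1 S31].
- by rewrite S12 S23 S31 !cards1.
exact: Hd.
Qed.
End Supp.


Lemma uniq4 (T : eqType) (a : T) s1 q t :
  a \notin s1 -> a \notin q -> a \notin t -> uniq s1 -> uniq q -> uniq t ->
  (forall v, v \in s1 -> v \in q -> False) -> (forall v, v \in s1 -> v \in t -> False) ->
  (forall v, v \in q -> v \in t -> False) -> uniq (a :: s1 ++ q ++ t).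
Proof.
move=> A1 A2 A3 U1 U2 U3 D1 D2 D3.
rewrite cons_uniq !mem_cat (negbTE A1) (negbTE A2) (negbTE A3) /=.
rewrite !cat_uniq U1 U2 U3 !andbT /=; apply/andP; split.
  apply/hasPn => v; rewrite mem_cat => /orP[] H; apply/negP => H'.
    exact: D1 H' H.
  exact: D2 H' H.
by apply/hasPn => v H; apply/negP => H'; exact: D3 H' H.
Qed.

Lemma to_rat (W m : nat) : (W <= m * 3)%N -> (W%:R / 3%:R <= (m%:R : rat))%R.
Proof. by move=> H; rewrite ler_pdivrMr ?ltr0n // -natrM ler_nat. Qed.

Lemma geo_ltx (T : finType) (e : rel T) r a s z v :
  geo e r a s z -> v \in s -> v != z -> level e r v < level e r z.
Proof.
move=> G Hv Nv; have [_ Hl _ Hm _] := G.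
have Hu : uniq (map (level e r) s) by rewrite Hm iota_uniq.
have := geo_lt G Hv; case/andP => _ Hle; rewrite ltn_neqAle Hle andbT.
move: Hv Nv Hu Hl; case/lastP: s {G Hm} => // S w; rewrite last_rcons => Hv Nv Hu Hw; subst w.
move: Hv; rewrite mem_rcons inE (negbTE Nv) /= => HvS.
move: Hu; rewrite map_rcons rcons_uniq => /andP[Hn _]; apply/eqP => E; move/negP: Hn; apply.
rewrite -E; exact: map_f.
Qed.

Lemma arith (dxy du1x dx1 du1y du13 du3y du31 d12 d23 d32 l1 l2 l3 lx ly : nat) :
  du1x + l1 <= lx -> lx <= l2 -> du3y + l3 <= ly ->
  dxy <= dx1 + du1y -> du1y <= du13 + du3y ->
  dx1 = du1x -> du31 = du13 -> d32 = d23 ->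
  l2 <= l1 + d12 -> l2 <= l3 + d32 -> ly = lx ->
  dxy <= maxn d12 (maxn d23 du31) * 3.
Proof. lia. Qed.

Theorem mainTheorem3 (T : finType) (e : rel T) :
  simple_graph e -> connected_graph e -> ~ is_tree e ->
  exists c : seq T, is_gcycle e c /\
    k_supported e ((cycle_width e)%:R / 3%:R) c.
Proof.
move=> [esym eirr] econ ntree.
have [c0 Hc0] : exists c, is_gcycle e c.
  case: (classic (exists c, is_gcycle e c)) => // H; case: ntree; split => // c.
  by apply/negP => Hc; apply: H; exists c.
case: (posnP (cycle_width e)) => [W0|Wpos].
  move: Hc0; case: c0 => [|x0 [|x1 [|x2 rest]]]; try by case/and3P.
  move=> /and3P[U _ Hcy]; exists [:: x0, x1, x2 & rest].
  move: Hcy => /= /and3P[E01 E12 Pr].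
  apply: (@supp _ _ eirr x0 [:: x1] [:: x2] rest) => //=; first by rewrite E01.
    by rewrite E12.
  by move=> *; rewrite W0 mul0r ler0n.
have [r Hr] : {r : T | cycle_width e = Wr e r}.
  have H0 : 0 < #|T| by apply/card_gt0P; case: c0 Hc0 => // x0 _ _; exists x0.
  rewrite /cycle_width; exact: bigop.eq_bigmax.
have [x Hx] : {x : T | Wr e r = \max_(y | (level e r y == level e r x) && sim_n e r (level e r x) x y) dist e x y}.
  have H0 : 0 < #|T| by apply/card_gt0P; exists r.
  rewrite /Wr; exact: bigop.eq_bigmax.
set P := fun y => (level e r y == level e r x) && sim_n e r (level e r x) x y.
have Px : P x by rewrite /P eqxx /sim_n connect0.
have [y Py Hy] : exists2 y, P y & \max_(y | P y) dist e x y = dist e x y.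
  exists [arg max_(y > x | P y) dist e x y]; first by case: arg_maxnP.
  exact: bigop.bigmax_eq_arg.
rewrite -/P Hy in Hx; rewrite Hx in Hr; rewrite Hr in Wpos *.
move: Py; rewrite /P => /andP[/eqP Hly Hsim].
set n := level e r x in Hly Hsim.
have Nxy : x != y by apply/eqP => E; rewrite E dist_xx in Wpos.
have [a [s1 [s2 [G1 G2 Dis]]]] := twogeo econ (erefl n) Hly Nxy.
set lv := level e r.
set f := fun u v => e u v && (n < maxn (lv u) (lv v)).
move: Hsim; rewrite /sim_n -/lv -/f => /connectP [p Hp Ey].
have : last x p = y by rewrite Ey.
case: (shortenP Hp) => q Hq Uq _ Hql.
have qlev : forall z s, path f z s -> forall u, u \in s -> n <= lv u.
  move=> z s; elim: s z => // u' s IH z /= /andP[Hf Hs] u; rewrite inE => /orP[/eqP ->|Hu].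
    move: Hf => /andP[Ez Hm]; have Ez' : e u' z by rewrite esym.
    have := lv_edge econ r Ez'; rewrite -/lv; move: Hm; lia.
  exact: IH Hs u Hu.
have Hqe : path e x q by apply: sub_path Hq => u v /andP[].
have Hqn : forall u, u \in x :: q -> n <= lv u.
  by move=> u; rewrite inE => /orP[/eqP ->|]; [rewrite leqnn | exact: qlev Hq u].
have xq : x \notin q by move: Uq; rewrite cons_uniq => /andP[].
have Uq' : uniq q by move: Uq; rewrite cons_uniq => /andP[].
have G1' := G1; have G2' := G2.
case: G1' => [Pa1 La1 Lx Ma1 Da1]; case: G2' => [Pa2 La2 Ly Ma2 Da2].
rewrite -/lv in Lx Ly Ma1 Ma2 Da1 Da2.
have N1 : s1 != [::].
  apply/negP => /eqP E1; move: La1; rewrite E1 /= => Ea.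
  have H0 : size s2 = 0 by move: Ly Hly; rewrite /n /lv Ea => ->; rewrite -{2}[level e r x]addn0 => /addnI.
  by move: La2; rewrite (size0nil H0) /= => Eay; rewrite -Ea Eay eqxx in Nxy.
have Nq : q != [::] by apply/negP => /eqP E; move: Hql; rewrite E /= => E'; rewrite E' eqxx in Nxy.
have Hax : lv a < n.
  by have := geo_lt G1 (last_in a N1); rewrite La1 => /andP[H _]; exact: H.
have N2 : s2 != [::].
  apply/negP => /eqP E2; move: Ly Hax Hly; rewrite E2 /= /n /lv => Ly0 Hax0 Hly0.
  by rewrite -Hly0 Ly0 addn0 ltnn in Hax0.
move: G2 Pa2 La2 Ly Ma2 Da2 Dis; case/lastP: s2 N2 => // M y' _ G2 Pa2; rewrite last_rcons => Ey'.
subst y' => Ly Ma2 Da2 Dis.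
have Uc : uniq (a :: s1 ++ q ++ rev M).
  apply: uniq4.
  - by apply/negP => /(geo_lt G1); rewrite ltnn.
  - by apply/negP => /(qlev _ _ Hq); rewrite leqNgt Hax.
  - by rewrite mem_rev; apply/negP => H; have := geo_lt G2 (_ : a \in rcons M y); rewrite mem_rcons inE H orbT ltnn => /(_ isT).
  - by apply: (@map_uniq _ _ lv); rewrite Ma1 iota_uniq.
  - exact: Uq'.
  - rewrite rev_uniq; have : uniq (rcons M y) by apply: (@map_uniq _ _ lv); rewrite Ma2 iota_uniq.
    by rewrite rcons_uniq => /andP[].
  - move=> v Hv1 Hvq; case: (eqVneq v x) => [E|Ne].
      by rewrite -E Hvq in xq.
    by move: (geo_ltx G1 Hv1 Ne) (qlev _ _ Hq v Hvq); rewrite /n /lv => H1 H2; rewrite ltnNge H2 in H1.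
  - move=> v Hv1; rewrite mem_rev => HvM; apply: (Dis v Hv1).
    by rewrite mem_rcons inE HvM orbT.
  - move=> v Hvq; rewrite mem_rev => HvM.
    have UM : uniq (rcons M y) by apply: (@map_uniq _ _ lv); rewrite Ma2 iota_uniq.
    have Ne : v != y.
      by apply/eqP => E; move: UM; rewrite rcons_uniq -E HvM.
    have HvM' : v \in rcons M y by rewrite mem_rcons inE HvM orbT.
    by move: (geo_ltx G2 HvM' Ne) (qlev _ _ Hq v Hvq) Hly; rewrite /n /lv => H1 H2 H3; rewrite H3 ltnNge H2 in H1.
have Pr : path e y (rcons (rev M) a).
  have := Pa2; rewrite -(eq_path (e := fun u v => e v u)); last by move=> u v; rewrite esym.
  by rewrite -rev_path last_rcons belast_rcons rev_cons.
exists (a :: s1 ++ q ++ rev M).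
apply: (supp eirr) => //; rewrite ?La1 ?Hql //.
move=> u1 u2 u3 Hu1 Hu2 Hu3; apply: to_rat.
have D1 := Da1 u1 Hu1.
have H2 := Hqn u2 Hu2.
have Hu3' : u3 \in a :: rcons M y.
  by move: Hu3; rewrite !inE !mem_rcons !inE mem_rev => /or3P[] ->; rewrite ?orbT.
have D3 := Da2 u3 Hu3'.
have t1 := dist_tri econ x u1 y.
have t2 := dist_tri econ u1 u3 y.
have e1 := dist_sym esym econ x u1.
have e2 := dist_sym esym econ u3 u1.
have e3 := dist_sym esym econ u3 u2.
have l1 := lv_lip econ r u1 u2.
have l2 := lv_lip econ r u3 u2.
exact: (arith D1 H2 D3 t1 t2 e1 e2 e3 l1 l2 Hly).
Qed.
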